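(* Let $(\mathcal{I},+,\times,0,1)$ be a commutative idempotent semiring and let $m,n\ge 1$ and $\alpha_1,\dots,\alpha_m,\beta_1,\dots,\beta_n\in\mathcal{I}$. Let $f=\prod_{i=1}^m(x+\alpha_i)=\sum_{k=0}^m a_k x^{m-k}$ and $g=\prod_{j=1}^n(x+\beta_j)=\sum_{k=0}^n b_k x^{n-k}$ in $\mathcal{I}[x]$, so that $a_0=b_0=1$, $a_k=\sum_{1\le i_1<\dots<i_k\le m}\alpha_{i_1}\cdots\alpha_{i_k}$ and $b_k=\sum_{1\le j_1<\dots<j_k\le n}\beta_{j_1}\cdots\beta_{j_k}$. Define the resultant $\mathbf{R}=\prod_{i=1}^m\prod_{j=1}^n(\alpha_i+\beta_j)\in\mathcal{I}$ and the Sylvester expression $\mathbf{S}=\operatorname{per}(M)=\sum_{\sigma\in \mathfrak{S}_{m+n}}\prod_{i=1}^{m+n}M_{i\sigma(i)}\in\mathcal{I}$, where $M$ is the $(m+n)\times(m+n)$ Sylvester matrix: for $1\le j\le n$, row $j$ of $M$ has entry $a_k$ in column $j+k$ ($0\le k\le m$) and $0$ elsewhere; for $1\le i\le m$, row $n+i$ has entry $b_k$ in column $i+k$ ($0\le k\le n$) and $0$ elsewhere. Then $\mathbf{R}=\mathbf{S}$.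
   Context: A commutative idempotent semiring is a set $\mathcal{I}$ with binary operations $+,\times$ and elements $0,1$ such that $+$ is commutative, associative, has identity $0$ and is idempotent ($a+a=a$); $\times$ is commutative, associative, has identity $1$, and $a\times 0=0$; and $(a+b)\times c=a\times c+b\times c$ for all $a,b,c$. *)

(* Defs.v *)
From HB Require Import structures.
From mathcomp Require Import all_boot all_order all_algebra all_fingroup.
Set Implicit Arguments. Unset Strict Implicit. Unset Printing Implicit Defensive.
Import GRing.Theory.
Local Open Scope ring_scope.

Definition elem_sym (R : comPzSemiRingType) (m : nat) (alpha : 'I_m -> R) (k : nat) : R :=
  \sum_(S : {set 'I_m} | #|S| == k) \prod_(i in S) alpha i.

(* Sylvester matrix (0-based indices).  Rows r < n: entry a_k at column r + k
   (0 <= k <= m); rows r = n + i (i < m): entry b_k at column i + k (0 <= k <= n). *)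
Definition sylvester (R : comPzSemiRingType) (m n : nat)
  (a b : nat -> R) : 'M[R]_(m + n) :=
  \matrix_(r < m + n, c < m + n)
    if (r < n)%N then
      (if ((r <= c) && (c <= r + m))%N then a (c - r)%N else 0)
    else
      (if (((r - n) <= c) && (c <= (r - n) + n))%N then b (c - (r - n))%N else 0).

Definition permanent (R : comPzSemiRingType) (N : nat) (M : 'M[R]_N) : R :=
  \sum_(s : 'S_N) \prod_(i < N) M i (s i).

(* Main.v *)
Require Import Defs.
From HB Require Import structures.
From mathcomp Require Import all_boot all_order all_algebra all_fingroup.
From mathcomp Require Import zify.
Set Implicit Arguments. Unset Strict Implicit. Unset Printing Implicit Defensive.
Import GRing.Theory.
Local Open Scope ring_scope.

Section Ord.
Variable R : comPzSemiRingType.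
Hypothesis Hidem : forall x : R, x + x = x.

Definition le (x y : R) := x + y = y.

Lemma le_refl x : le x x. Proof. exact: Hidem. Qed.
Lemma le_trans x y z : le x y -> le y z -> le x z.
Proof. by rewrite /le => H1 H2; rewrite -H2 addrA H1. Qed.
Lemma le0 x : le 0 x. Proof. by rewrite /le add0r. Qed.
Lemma le_addl x y : le x (x + y). Proof. by rewrite /le addrA Hidem. Qed.
Lemma le_addr x y : le y (x + y). Proof. by rewrite addrC; apply: le_addl. Qed.
Lemma le_eq x y : x = y -> le x y. Proof. by move->; apply: le_refl. Qed.
Lemma le_antisym x y : le x y -> le y x -> x = y.
Proof. by rewrite /le => H1 H2; rewrite -H1 addrC H2. Qed.
Lemma le_add x y x' y' : le x y -> le x' y' -> le (x + x') (y + y').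
Proof.
by rewrite /le => H1 H2; rewrite addrACA H1 H2.
Qed.
Lemma le_mulr x y z : le x y -> le (x * z) (y * z).
Proof. by rewrite /le => H; rewrite -mulrDl H. Qed.
Lemma le_mul x y x' y' : le x y -> le x' y' -> le (x * x') (y * y').
Proof.
move=> H1 H2; apply: le_trans (le_mulr x' H1) _.
by rewrite !(mulrC y); apply: le_mulr.
Qed.
Lemma le_sum (I : finType) (P : pred I) (F : I -> R) y :
  (forall i, P i -> le (F i) y) -> le (\sum_(i | P i) F i) y.
Proof.
move=> H; apply: (big_ind (fun x => le x y)) => //; first exact: le0.
by move=> a b Ha Hb; rewrite /le -addrA Hb Ha.
Qed.
Lemma le_summand (I : finType) (P : pred I) (F : I -> R) i :
  P i -> le (F i) (\sum_(i | P i) F i).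
Proof. by move=> Pi; rewrite (bigD1 i) //=; apply: le_addl. Qed.
Lemma le_prod (I : finType) (P : pred I) (F G : I -> R) :
  (forall i, P i -> le (F i) (G i)) -> le (\prod_(i | P i) F i) (\prod_(i | P i) G i).
Proof.
move=> H; apply: (big_ind2 le) => //.
by move=> *; apply: le_mul.
Qed.
Lemma le_sum2 (I : finType) (P : pred I) (F G : I -> R) :
  (forall i, P i -> le (F i) (G i)) -> le (\sum_(i | P i) F i) (\sum_(i | P i) G i).
Proof.
move=> H; apply: (big_ind2 le) => //.
by move=> *; apply: le_add.
Qed.
End Ord.
Section ES.
Variable R : comPzSemiRingType.
Hypothesis Hidem : forall x : R, x + x = x.
Variables (m : nat) (alpha : 'I_m -> R).
Local Notation es := (elem_sym alpha).
Local Notation le := (@le R).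

Lemma es_big k : (m < k)%N -> es k = 0.
Proof.
move=> Hk; rewrite /elem_sym big_pred0 // => S.
apply/negbTE; apply/eqP => HS.
by move: (max_card S); rewrite card_ord HS leqNgt Hk.
Qed.

Lemma es_unit p q : (p < q)%N -> le (es p * es q) (es p.+1 * es q.-1).
Proof.
move=> Hpq; rewrite /elem_sym big_distrl /=; apply: le_sum => // S /eqP HS.
rewrite big_distrr /=; apply: le_sum => // T /eqP HT.
have : (0 < #|T :\: S|)%N.
  rewrite cardsD subn_gt0 HT; apply: leq_ltn_trans Hpq.
  by rewrite -HS subset_leq_card // subsetIr.
case/card_gt0P => x; rewrite inE => /andP [xS xT].
rewrite (big_setD1 x xT) /= mulrA (mulrC _ (alpha x)) -(big_setU1 _ xS) /=.
apply: le_mul; apply: le_summand => //.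
  by rewrite cardsU1 xS HS.
by rewrite -HT (cardsD1 x T) xT.
Qed.

Lemma es_iter s p q : (p + s.*2 <= q)%N -> le (es p * es q) (es (p + s) * es (q - s)).
Proof.
elim: s => [|s IH] Hs; first by rewrite addn0 subn0; apply: le_refl.
apply: le_trans (IH _) _; first by rewrite -!muln2 in Hs *; lia.
have := es_unit (p:=p + s) (q:=q - s).
rewrite addnS subnS; apply; rewrite -!muln2 in Hs; lia.
Qed.

Lemma es_bal p q u v : (p <= u)%N -> (p <= v)%N -> (u + v = p + q)%N ->
  le (es p * es q) (es u * es v).
Proof.
wlog uv : u v / (u <= v)%N.
  move=> W pu pv E; case: (leqP u v) => H; first exact: W.
  by rewrite (mulrC (es u)); apply: W => //; [exact: ltnW | rewrite addnC].
move=> pu pv E.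
have -> : u = (p + (u - p))%N by rewrite subnKC.
have -> : v = (q - (u - p))%N by lia.
by apply: es_iter; rewrite -muln2; lia.
Qed.
End ES.
Section Expand.
Variable R : comPzSemiRingType.
Hypothesis Hidem : forall x : R, x + x = x.
Variables (m : nat) (alpha : 'I_m -> R).
Local Notation es := (elem_sym alpha).
Local Notation le := (@le R).

Lemma prod_if (S : {set 'I_m}) (x : R) :
  \prod_i (if i \in S then alpha i else x) = (\prod_(i in S) alpha i) * x ^+ (m - #|S|).
Proof.
rewrite (bigID (mem S)) /=; congr (_ * _); first by apply: eq_bigr => i ->.
rewrite (eq_bigr (fun _ => x)); last by move=> i /negbTE ->.
rewrite prodr_const; congr (_ ^+ _).
have H := cardsC S; rewrite card_ord in H.
have -> : #|[pred i | i \notin S]| = #|~: S| by apply: eq_card => i; rewrite !inE.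
have Hc : (#|S| <= m)%N by have := max_card S; rewrite card_ord.
by apply/eqP; rewrite -(eqn_add2l #|S|) H subnKC.
Qed.

Lemma prod_expand (x : R) :
  \prod_(i < m) (alpha i + x) =
  \sum_(f : {ffun 'I_m -> bool}) \prod_i (if f i then alpha i else x).
Proof.
rewrite -(bigA_distr_bigA (fun i (b : bool) => if b then alpha i else x)) /=.
by apply: eq_bigr => i _; rewrite big_bool.
Qed.

Lemma es_x_le c e (x : R) : (c + e = m)%N -> le (es c * x ^+ e) (\prod_(i < m) (alpha i + x)).
Proof.
move=> Hce; rewrite prod_expand /elem_sym big_distrl /=; apply: le_sum => // S /eqP HS.
have -> : e = (m - #|S|)%N by rewrite HS -Hce addKn.
rewrite -prod_if.
set f := [ffun i => i \in S].
have -> : \prod_i (if i \in S then alpha i else x) = \prod_i (if f i then alpha i else x).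
  by apply: eq_bigr => i _; rewrite /f ffunE.
exact: (le_summand Hidem).
Qed.

Lemma prod_le_es (x : R) :
  le (\prod_(i < m) (alpha i + x)) (\sum_(k < m.+1) es k * x ^+ (m - k)).
Proof.
rewrite prod_expand; apply: le_sum => // f _.
set S := [set i | f i].
have -> : \prod_i (if f i then alpha i else x) = \prod_i (if i \in S then alpha i else x).
  by apply: eq_bigr => i _; rewrite /S inE.
rewrite prod_if.
have HS : (#|S| < m.+1)%N by rewrite ltnS; have := max_card S; rewrite card_ord.
apply: (le_trans (y := es (Ordinal HS) * x ^+ (m - Ordinal HS))); last first.
  exact: (le_summand Hidem (fun k : 'I_m.+1 => es k * x ^+ (m - k))).
rewrite /=.
apply: le_mulr; rewrite /elem_sym.
exact: (@le_summand R Hidem _ (fun S0 : {set 'I_m} => #|S0| == #|S|) (fun S0 => \prod_(i in S0) alpha i) S (eqxx _)).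
Qed.
End Expand.
Lemma card_sum (T : finType) (P : pred T) : #|[set i | P i]| = \sum_i (P i : nat).
Proof.
rewrite -sum1_card big_mkcond /=; apply: eq_bigr => i _; rewrite inE.
by case: (P i).
Qed.

Lemma sum_lt n x : \sum_(y < n) ((y < x)%N : nat) = minn n x.
Proof.
elim: n => [|n IH]; first by rewrite big_ord0 min0n.
rewrite big_ord_recr /= IH; case: (ltnP n x) => /= H; lia.
Qed.

Lemma card_lt n x : #|[set y : 'I_n | (y < x)%N]| = minn n x.
Proof. by rewrite card_sum sum_lt. Qed.

Lemma downclosed_seg n (A : {set 'I_n}) :
  (forall j j' : 'I_n, (j < j')%N -> j' \in A -> j \in A) ->
  forall x : 'I_n, (x \in A) = (x < #|A|)%N.
Proof.
move=> Hd x; apply/idP/idP => [xA | ].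
  have : [set y : 'I_n | (y < x.+1)%N] \subset A.
    apply/subsetP => y; rewrite inE ltnS leq_eqVlt => /orP [/eqP/val_inj -> //|].
    by move=> yx; apply: Hd yx xA.
  move/subset_leq_card; rewrite card_lt.
  have := ltn_ord x; move: #|A| (nat_of_ord x) => k y; lia.
apply: contraTT => xA.
have : A \subset [set y : 'I_n | (y < x)%N].
  apply/subsetP => y yA; rewrite inE ltnNge; apply/negP => xy.
  move: xy; rewrite leq_eqVlt => /orP [/eqP/val_inj xy|xy].
    by move: xA; rewrite xy yA.
  by move: xA; rewrite (Hd _ _ xy yA).
move/subset_leq_card; rewrite card_lt -leqNgt; move: #|A| => k; lia.
Qed.

Lemma ltn_sum_one (I : finType) (i0 : I) (f g : I -> nat) :
  (forall i, (f i <= g i)%N) -> (f i0 < g i0)%N -> (\sum_i f i < \sum_i g i)%N.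
Proof.
move=> H H0; rewrite (bigD1 i0) //= (bigD1 i0 (F := g)) //=.
by rewrite -addSn; apply: leq_add => //; apply: leq_sum => i _.
Qed.

Section LG.
Variable R : comPzSemiRingType.
Hypothesis Hidem : forall x : R, x + x = x.
Local Notation le := (@le R).
Variables (m n : nat) (a : nat -> R).
Hypothesis Hbal : forall p q u v : nat, (p <= u)%N -> (p <= v)%N -> (u + v = p + q)%N ->
  le (a p * a q) (a u * a v).

Definition cnt (F : 'I_m -> {set 'I_n}) (x : 'I_n) := #|[set i | x \notin F i]|.
Definition PF (F : 'I_m -> {set 'I_n}) := \prod_(x < n) a (cnt F x).
Definition muF (F : 'I_m -> {set 'I_n}) := (\sum_(i < m) \sum_(x in F i) (x : nat))%N.
Definition canonF (F : 'I_m -> {set 'I_n}) :=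
  \prod_(r < n) a (\sum_(i < m) ((#|F i| <= r)%N : nat)).

Definition shiftF (j j' : 'I_n) (F : 'I_m -> {set 'I_n}) (i : 'I_m) :=
  if (j' \in F i) && (j \notin F i) then j |: (F i :\ j') else F i.

Section Shift.
Variables (j j' : 'I_n) (F : 'I_m -> {set 'I_n}).
Hypothesis jj' : (j < j')%N.
Let njj : j != j'. Proof. by rewrite neq_ltn jj'. Qed.

Lemma shift_j i : (j \in shiftF j j' F i) = (j \in F i) || (j' \in F i).
Proof.
rewrite /shiftF; case Hj': (j' \in F i); case Hj: (j \in F i);
  by rewrite /= ?Hj ?Hj' ?inE ?eqxx.
Qed.

Lemma shift_j' i : (j' \in shiftF j j' F i) = (j \in F i) && (j' \in F i).
Proof.
rewrite /shiftF; case Hj': (j' \in F i); case Hj: (j \in F i) => //=;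
  by rewrite !inE ?eqxx ?Hj' ?Hj // eq_sym (negbTE njj).
Qed.

Lemma shift_x i x : x != j -> x != j' -> (x \in shiftF j j' F i) = (x \in F i).
Proof.
move=> xj xj'; rewrite /shiftF; case: ifP => // _.
by rewrite !inE (negbTE xj) (negbTE xj').
Qed.

Lemma shift_card i : #|shiftF j j' F i| = #|F i|.
Proof.
rewrite /shiftF; case: ifP => // /andP [Hj' Hj].
rewrite cardsU1 (cardsD1 j' (F i)) Hj'.
have -> : (j \notin F i :\ j') = true by rewrite !inE negb_and Hj orbT.
by [].
Qed.

Lemma shift_canon : canonF (shiftF j j' F) = canonF F.
Proof. by apply: eq_bigr => r _; congr (a _); apply: eq_bigr => i _; rewrite shift_card. Qed.

Lemma shift_mu i0 : j' \in F i0 -> j \notin F i0 -> (muF (shiftF j j' F) < muF F)%N.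
Proof.
move=> H1 H2; rewrite /muF.
have E : forall i, (j' \in F i) && (j \notin F i) ->
  (\sum_(x in shiftF j j' F i) (x : nat) + j' = \sum_(x in F i) (x : nat) + j)%N.
  move=> i /andP [A B]; rewrite /shiftF A B /=.
  rewrite big_setU1 /=; last by rewrite !inE negb_and B orbT.
  rewrite (big_setD1 j' A) /=.
  move: (\sum_(x in F i :\ j') (x:nat))%N => s.
  move: (nat_of_ord j) (nat_of_ord j') => u v; lia.
apply: (@ltn_sum_one _ i0 (fun i => \sum_(x in shiftF j j' F i) (x:nat))%N
   (fun i => \sum_(x in F i) (x:nat))%N) => [i|].
  case C: ((j' \in F i) && (j \notin F i)); last by rewrite /shiftF C.
  have := E i C; have := ltnW jj'.
  move: (\sum_(x in F i) (x:nat))%N (\sum_(x in shiftF j j' F i) (x:nat))%N => s1 s2.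
  move: (nat_of_ord j) (nat_of_ord j') => u v; lia.
have := E i0; rewrite H1 H2 => /(_ isT); have := jj'.
move: (\sum_(x in F i0) (x:nat))%N (\sum_(x in shiftF j j' F i0) (x:nat))%N => s1 s2.
move: (nat_of_ord j) (nat_of_ord j') => u v; lia.
Qed.

Lemma prod_two (G : 'I_n -> R) :
  \prod_(x < n) G x = G j * G j' * \prod_(x | (x != j) && (x != j')) G x.
Proof. by rewrite (bigD1 j) //= (bigD1 j') //= ?(eq_sym j') ?njj // mulrA. Qed.

Lemma shift_P : le (PF (shiftF j j' F)) (PF F).
Proof.
rewrite /PF prod_two (prod_two (fun x => a (cnt F x))).
have -> : \prod_(i | (i != j) && (i != j')) a (cnt (shiftF j j' F) i) =
          \prod_(i | (i != j) && (i != j')) a (cnt F i).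
  apply: eq_bigr => x /andP [xj xj']; congr (a _); apply: eq_card => i.
  by rewrite !inE shift_x.
apply: le_mulr.
set A := [set i | j \notin F i]; set B := [set i | j' \notin F i].
have -> : cnt (shiftF j j' F) j = #|A :&: B|.
  by apply: eq_card => i; rewrite !inE shift_j negb_or.
have -> : cnt (shiftF j j' F) j' = #|A :|: B|.
  by apply: eq_card => i; rewrite !inE shift_j' negb_and.
apply: Hbal.
- by apply: subset_leq_card; apply: subsetIl.
- by apply: subset_leq_card; apply: subsetIr.
- by rewrite [RHS]addnC cardsUI.
Qed.
End Shift.

Lemma LG_comp (F : 'I_m -> {set 'I_n}) :
  [forall i, forall j : 'I_n, forall j' : 'I_n,
            ((j < j')%N && (j' \in F i)) ==> (j \in F i)] -> canonF F = PF F.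
Proof.
move=> Hc.
have Hseg : forall i x, (x \in F i) = (x < #|F i|)%N.
  move=> i; apply: downclosed_seg => j j' jj' Hj'.
  move/forallP: Hc => /(_ i) /forallP /(_ j) /forallP /(_ j') /implyP; apply.
  by rewrite jj' Hj'.
apply: eq_bigr => x _; congr (a _); rewrite /cnt card_sum.
by apply: eq_bigr => i _; rewrite Hseg -leqNgt.
Qed.

Lemma LG_main d (F : 'I_m -> {set 'I_n}) : (muF F <= d)%N -> le (canonF F) (PF F).
Proof.
elim: d F => [|d IH] F Hd;
  (case: (boolP [forall i, forall j : 'I_n, forall j' : 'I_n,
            ((j < j')%N && (j' \in F i)) ==> (j \in F i)]) => [Hc | Hnc];
     [by rewrite LG_comp //; apply: le_refl|]);
  move/forallPn: Hnc => [i0 /forallPn [j /forallPn [j' ]]];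
  rewrite negb_imply => /andP [/andP [jj' Hj'] Hj];
  have Hmu := shift_mu jj' Hj' Hj.
  by move: Hd; rewrite leqn0 => /eqP H; rewrite H in Hmu.
rewrite -(@shift_canon j j' F).
apply: (le_trans (y := PF (shiftF j j' F))); last exact: shift_P.
by apply: IH; rewrite -ltnS; apply: leq_trans Hmu Hd.
Qed.

Lemma LG (F : 'I_m -> {set 'I_n}) : le (canonF F) (PF F).
Proof. exact: (LG_main (leqnn _)). Qed.
End LG.
Lemma prod_ifpow (R : comPzSemiRingType) (I : finType) (P : pred I) (x : R) :
  \prod_(i : I) (if P i then x else 1) = x ^+ (\sum_(i : I) (P i : nat)).
Proof.
rewrite (big_morph (fun k => x ^+ k) (exprD x) (expr0 x)).
by apply: eq_bigr => i _; case: (P i); rewrite ?expr1 ?expr0.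
Qed.

Section Split.
Variables (m n : nat).
Definition fr (r : 'I_n) : 'I_(m + n) := Ordinal (leq_trans (ltn_ord r) (leq_addl m n)).
Lemma gr_proof (i : 'I_m) : (n + i < m + n)%N.
Proof. by rewrite addnC ltn_add2r. Qed.
Definition gr (i : 'I_m) : 'I_(m + n) := Ordinal (gr_proof i).

Lemma big_split_fg (T : Type) (idx : T) (op : Monoid.com_law idx) (F : 'I_(m + n) -> T) :
  \big[op/idx]_(t < m + n) F t =
  op (\big[op/idx]_(r < n) F (fr r)) (\big[op/idx]_(i < m) F (gr i)).
Proof.
rewrite (reindex (@cast_ord (n + m) (m + n) (addnC n m))) /=; last first.
  by exists (cast_ord (addnC m n)) => x _; apply: val_inj.
rewrite big_split_ord /=; congr (op _ _); apply: eq_bigr => x _; congr (F _);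
  exact: val_inj.
Qed.
End Split.
Section Main.
Variable R : comPzSemiRingType.
Hypothesis Hidem : forall x : R, x + x = x.
Local Notation le := (@le R).
Variables (m n : nat) (alpha : 'I_m -> R) (beta : 'I_n -> R).
Local Notation a := (elem_sym alpha).
Local Notation b := (elem_sym beta).
Local Notation N := (m + n)%N.

Definition G (C : nat -> R) (o c : nat) : R := if (o <= c)%N then C (c - o)%N else 0.
Definition E (t c : nat) : R := if (t < n)%N then G a t c else G b (t - n)%N c.

Lemma G_bound (C : nat -> R) (B o c : nat) : (forall k, (B < k)%N -> C k = 0) ->
  (if ((o <= c) && (c <= o + B))%N then C (c - o)%N else 0) = G C o c.
Proof.
move=> HC; rewrite /G; case: (leqP o c) => //= h.
case: (leqP c (o + B)) => // h2; rewrite HC //; lia.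
Qed.

Lemma ME (t c : 'I_N) : sylvester m n a b t c = E t c.
Proof.
rewrite /sylvester /E mxE.
case: ifP => Ht; apply: G_bound => k; [exact: es_big | exact: es_big].
Qed.

Lemma G_swap (C : nat -> R) (o1 o2 c1 c2 : nat) :
  (forall p q u v : nat, (p <= u)%N -> (p <= v)%N -> (u + v = p + q)%N ->
     le (C p * C q) (C u * C v)) ->
  (o1 < o2)%N -> (c2 < c1)%N ->
  le (G C o1 c1 * G C o2 c2) (G C o1 c2 * G C o2 c1).
Proof.
move=> Hbal ho hc; rewrite /G.
case: (leqP o1 c1) => h1; last by rewrite mul0r; apply: le0.
case: (leqP o2 c2) => h2; last by rewrite mulr0; apply: le0.
have -> : (o1 <= c2)%N by lia.
have -> : (o2 <= c1)%N by lia.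
rewrite mulrC; apply: Hbal; lia.
Qed.

Lemma E_swap (t1 t2 c1 c2 : nat) : (t1 < t2)%N -> (t1 < n)%N = (t2 < n)%N -> (c2 < c1)%N ->
  le (E t1 c1 * E t2 c2) (E t1 c2 * E t2 c1).
Proof.
move=> h12 hb hc; rewrite /E hb.
case: ifP => H.
  by apply: G_swap => //; exact: es_bal.
apply: G_swap => //; first exact: es_bal.
move: hb; rewrite H => /negbT; rewrite -leqNgt; lia.
Qed.

Definition term (s : 'S_N) := \prod_(t < N) E t (s t).
Definition mu (s : 'S_N) := (\sum_(t < N) t * s t)%N.

Lemma big_two (T : Type) (idx : T) (op : Monoid.com_law idx) (t1 t2 : 'I_N) (F : 'I_N -> T) :
  t1 != t2 -> \big[op/idx]_(t < N) F t =
   op (op (F t1) (F t2)) (\big[op/idx]_(t | (t != t1) && (t != t2)) F t).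
Proof.
move=> h; rewrite (bigD1 t1) //= (bigD1 t2) //= ?(eq_sym t2) //.
by rewrite Monoid.mulmA.
Qed.

Section Swap.
Variables (s : 'S_N) (t1 t2 : 'I_N).
Hypotheses (h12 : (t1 < t2)%N) (hb : (t1 < n)%N = (t2 < n)%N) (hs : (s t2 < s t1)%N).
Let s' := (tperm t1 t2 * s)%g.
Let n12 : t1 != t2. Proof. by rewrite neq_ltn h12. Qed.
Let s'1 : s' t1 = s t2. Proof. by rewrite permM tpermL. Qed.
Let s'2 : s' t2 = s t1. Proof. by rewrite permM tpermR. Qed.
Let s'x t : (t != t1) && (t != t2) -> s' t = s t.
Proof. by case/andP => h1 h2; rewrite permM tpermD // eq_sym. Qed.

Lemma swap_term : le (term s) (term s').
Proof.
rewrite /term (big_two _ (fun t => E t (s t)) n12) (big_two _ (fun t => E t (s' t)) n12).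
rewrite s'1 s'2; apply: le_mul; first exact: E_swap.
by apply: (le_eq Hidem); apply: eq_bigr => t /s'x ->.
Qed.

Lemma swap_mu : (mu s < mu s')%N.
Proof.
rewrite /mu (big_two _ (fun t : 'I_N => t * s t)%N n12) (big_two _ (fun t : 'I_N => t * s' t)%N n12).
rewrite s'1 s'2 /=.
have -> : (\sum_(t | (t != t1) && (t != t2)) t * s' t = \sum_(t | (t != t1) && (t != t2)) t * s t)%N.
  by apply: eq_bigr => t /s'x ->.
rewrite ltn_add2r.
move: h12 hs; move: (nat_of_ord t1) (nat_of_ord t2) (nat_of_ord (s t1)) (nat_of_ord (s t2)) => x y u v.
nia.
Qed.
End Swap.

Lemma mu_bound s : (mu s <= N * (N * N))%N.
Proof.
rewrite /mu; apply: (@leq_trans (\sum_(t < N) (N * N))%N).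
  by apply: leq_sum => t _; apply: leq_mul; apply: ltnW.
by rewrite sum_nat_const card_ord.
Qed.
End Main.
Section Main2.
Variable R : comPzSemiRingType.
Hypothesis Hidem : forall x : R, x + x = x.
Local Notation le := (@le R).
Variables (m n : nat) (alpha : 'I_m -> R) (beta : 'I_n -> R).
Local Notation a := (elem_sym alpha).
Local Notation b := (elem_sym beta).
Local Notation N := (m + n)%N.
Local Notation RR := (\prod_(i < m) \prod_(j < n) (alpha i + beta j)).

Lemma betaF (Fam : 'I_m -> {set 'I_n}) :
  \prod_(i < m) \prod_(j in Fam i) beta j =
  \prod_(j < n) beta j ^+ (\sum_(i < m) ((j \in Fam i) : nat)).
Proof.
rewrite (eq_bigr (fun i => \prod_(j < n) (if j \in Fam i then beta j else 1))); last first.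
  by move=> i _; rewrite big_mkcond.
rewrite exchange_big /=; apply: eq_bigr => j _; exact: prod_ifpow.
Qed.

Lemma PF_bound (Fam : 'I_m -> {set 'I_n}) :
  le (PF a Fam * \prod_(i < m) \prod_(j in Fam i) beta j) RR.
Proof.
rewrite betaF /PF -big_split /= exchange_big /=; apply: (le_prod Hidem) => j _.
apply: (es_x_le Hidem).
rewrite /cnt card_sum -big_split /= (eq_bigr (fun _ => 1%N)).
  by rewrite sum_nat_const card_ord muln1.
by move=> i _; case: (j \in Fam i).
Qed.

Lemma final_bound (l : 'I_m -> nat) :
  le (\prod_(r < n) a (\sum_(i < m) ((l i <= r)%N : nat)) * \prod_(i < m) b (l i)) RR.
Proof.
rewrite (eq_bigr (fun i => \sum_(B : {set 'I_n})
     (if #|B| == l i then \prod_(j in B) beta j else 0))); last first.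
  by move=> i _; rewrite /elem_sym big_mkcond.
rewrite bigA_distr_bigA /= big_distrr /=.
apply: (big_ind (fun x => le x RR)); [exact: le0| |move=> Fam _].
  by move=> x y Hx Hy; rewrite /le -addrA Hy Hx.
case: (boolP [forall i, #|Fam i| == l i]) => [/forallP Hall | /forallPn [i0 Hi0]].
  rewrite (eq_bigr (fun i => \prod_(j in Fam i) beta j)); last first.
    by move=> i _; rewrite Hall.
  apply: le_trans (PF_bound Fam); apply: le_mulr.
  have -> : \prod_(r < n) a (\sum_(i < m) ((l i <= r)%N : nat)) = canonF a Fam.
    apply: eq_bigr => r _; congr (a _); apply: eq_bigr => i _.
    by rewrite (eqP (Hall i)).
  exact: (LG Hidem (es_bal Hidem alpha)).
rewrite (bigD1 i0) //= (negbTE Hi0) mul0r mulr0; exact: le0.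
Qed.
End Main2.
Section Sorted.
Variable R : comPzSemiRingType.
Hypothesis Hidem : forall x : R, x + x = x.
Local Notation le := (@le R).
Variables (m n : nat) (alpha : 'I_m -> R) (beta : 'I_n -> R).
Local Notation a := (elem_sym alpha).
Local Notation b := (elem_sym beta).
Local Notation N := (m + n)%N.
Local Notation RR := (\prod_(i < m) \prod_(j < n) (alpha i + beta j)).

Lemma perm_count (s : 'S_N) (x : 'I_N) : (\sum_(t < N) ((s t < x)%N : nat))%N = x.
Proof.
transitivity (\sum_(t < N) ((t < x)%N : nat))%N.
  by rewrite [RHS](reindex_inj (@perm_inj _ s)).
by rewrite sum_lt; apply/minn_idPr; apply: ltnW.
Qed.

Lemma sum_fg (F : 'I_N -> nat) :
  (\sum_(t < N) F t = \sum_(r < n) F (fr m r) + \sum_(i < m) F (gr n i))%N.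
Proof. exact: (big_split_fg (Monoid.ComLaw.clone _ _ addn _) F). Qed.

Variable s : 'S_N.
Hypothesis Hsort : forall t1 t2 : 'I_N, (t1 < t2)%N -> (t1 < n)%N = (t2 < n)%N -> (s t1 < s t2)%N.

Local Notation cf r := (nat_of_ord (s (fr m r))).
Local Notation cg i := (nat_of_ord (s (gr n i))).

Lemma cf_lt r r' : (cf r' < cf r)%N = (r' < r)%N.
Proof.
case: (ltngtP r' r) => H.
- by apply: Hsort => //=; rewrite (ltn_ord r) (ltn_ord r').
- apply/negbTE; rewrite -leqNgt; apply: ltnW; apply: Hsort => //=.
  by rewrite (ltn_ord r) (ltn_ord r').
- have -> : r' = r by apply: val_inj.
  by rewrite !ltnn.

Qed.

Lemma cg_lt i i' : (cg i' < cg i)%N = (i' < i)%N.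
Proof.
have Hb : forall k : 'I_m, (gr n k < n)%N = false by move=> k /=; rewrite ltnNge leq_addr.
case: (ltngtP i' i) => H.
- by apply: Hsort; rewrite /= ?Hb ?ltn_add2l.
- apply/negbTE; rewrite -leqNgt; apply: ltnW; apply: Hsort; by rewrite /= ?Hb ?ltn_add2l.
- have -> : i' = i by apply: val_inj.
  by rewrite !ltnn.
Qed.

Lemma cf_eq r : cf r = (r + \sum_(i < m) ((cg i < cf r)%N : nat))%N.
Proof.
rewrite -{1}(perm_count s (s (fr m r))) sum_fg; congr (_ + _)%N.
rewrite (eq_bigr (fun r' : 'I_n => ((r' < r)%N : nat))); last by move=> r' _; rewrite cf_lt.
by rewrite sum_lt; apply/minn_idPr; apply: ltnW.
Qed.

Lemma cg_eq i : cg i = (\sum_(r < n) ((cf r < cg i)%N : nat) + i)%N.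
Proof.
rewrite -{1}(perm_count s (s (gr n i))) sum_fg; congr (_ + _)%N.
rewrite (eq_bigr (fun i' : 'I_m => ((i' < i)%N : nat))); last by move=> i' _; rewrite cg_lt.
by rewrite sum_lt; apply/minn_idPr; apply: ltnW.
Qed.

Lemma key r i : (cg i < cf r)%N = (\sum_(r' < n) ((cf r' < cg i)%N : nat) <= r)%N.
Proof.
apply/idP/idP => H.
  have E : (r = minn n r :> nat) by apply/esym/minn_idPr; apply: ltnW.
  rewrite [X in (_ <= X)%N]E -sum_lt.
  apply: leq_sum => r' _; case h: (cf r' < cg i)%N => //=; rewrite -(cf_lt r r').
  by rewrite (ltn_trans h H).
have Hne : cg i != cf r.
  apply/negP => /eqP /val_inj /perm_inj /(congr1 val) /= E.
  by move: (ltn_ord r); rewrite -E ltnNge leq_addr.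
rewrite ltn_neqAle Hne /=; move: H; apply: contraLR; rewrite -!ltnNge => H.
apply: (@leq_trans (\sum_(r' < n) ((r' < r.+1)%N : nat))%N).
  by rewrite sum_lt; rewrite (minn_idPr _) //.
apply: leq_sum => r' _; case h: (r' < r.+1)%N => //=.
rewrite ltnS leqNgt -(cf_lt r' r) -leqNgt in h.
by rewrite (leq_ltn_trans h H).
Qed.

Lemma sorted_term : le (term alpha beta s) RR.
Proof.
rewrite /term big_split_fg /=.
have -> : \prod_(r < n) E alpha beta (fr m r) (s (fr m r)) =
    \prod_(r < n) a (\sum_(i < m) ((cg i - i <= r)%N : nat)).
  apply: eq_bigr => r _; rewrite /E /G /= (ltn_ord r).
  have -> : (r <= cf r)%N by rewrite cf_eq leq_addr.
  congr (a _); rewrite {1}cf_eq addKn; apply: eq_bigr => i _.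
  by rewrite key [in RHS]cg_eq addnK.
have -> : \prod_(i < m) E alpha beta (gr n i) (s (gr n i)) =
    \prod_(i < m) b (cg i - i).
  apply: eq_bigr => i _; rewrite /E /G /= ltnNge leq_addr /= addKn.
  by have -> : (i <= cg i)%N by rewrite cg_eq leq_addl.
exact: final_bound.
Qed.
End Sorted.
Section SleR.
Variable R : comPzSemiRingType.
Hypothesis Hidem : forall x : R, x + x = x.
Local Notation le := (@le R).
Variables (m n : nat) (alpha : 'I_m -> R) (beta : 'I_n -> R).
Local Notation N := (m + n)%N.
Local Notation RR := (\prod_(i < m) \prod_(j < n) (alpha i + beta j)).

Lemma term_le_ind k (s : 'S_N) : (N * (N * N) - @mu m n s <= k)%N -> le (term alpha beta s) RR.
Proof.
elim: k s => [|k IH] s Hk;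
  (case: (boolP [exists t1 : 'I_N, exists t2 : 'I_N, [&& (t1 < t2)%N, (t1 < n)%N == (t2 < n)%N
      & (s t2 < s t1)%N]]) => [/existsP [t1 /existsP [t2 /and3P [h12 /eqP hb hs]]] | Hno]).
all: try (apply: (sorted_term Hidem) => t1 t2 h12 hb;
     move/existsPn: Hno => /(_ t1) /existsPn /(_ t2);
     rewrite h12 hb eqxx /= -leqNgt leq_eqVlt => /orP [/eqP/val_inj/perm_inj E|//];
     by move: h12; rewrite E ltnn).
- have := swap_mu h12 hb hs; have := mu_bound (tperm t1 t2 * s)%g; lia.
- apply: le_trans (swap_term Hidem alpha beta h12 hb hs) _; apply: IH.
  have := swap_mu h12 hb hs; have := mu_bound (tperm t1 t2 * s)%g; lia.
Qed.

Lemma term_le_R (s : 'S_N) : le (term alpha beta s) RR.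
Proof. exact: (term_le_ind (leqnn _)). Qed.
End SleR.
Lemma sum_ge m x : (x <= m)%N -> (\sum_(i < m) ((x <= i)%N : nat) = m - x)%N.
Proof.
move=> hx.
have H : (\sum_(i < m) ((i < x)%N : nat) + \sum_(i < m) ((x <= i)%N : nat) = m)%N.
  rewrite -big_split /= (eq_bigr (fun _ => 1%N)) ?sum_nat_const ?card_ord ?muln1 //.
  by move=> i _; case: (ltnP i x).
rewrite sum_lt in H; move: H; rewrite (minn_idPr hx); lia.
Qed.

Lemma cnt_split n (g : 'I_n -> nat) v :
  (\sum_(r < n) ((g r <= v)%N : nat) = \sum_(r < n) ((g r < v)%N : nat) + \sum_(r < n) ((g r == v) : nat))%N.
Proof.
rewrite -big_split /=; apply: eq_bigr => r _.
by case: (ltngtP (g r) v) => h //=; rewrite ?h.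
Qed.

Lemma prod_count (R : comPzSemiRingType) n (F : nat -> R) (g : 'I_n -> nat) B :
  (forall r, (g r < B)%N) ->
  \prod_(r < n) F (g r) = \prod_(v < B) F v ^+ (\sum_(r < n) ((g r == v) : nat)).
Proof.
move=> HB.
rewrite (eq_bigr (fun r => \prod_(v < B) (if g r == v then F v else 1))); last first.
  move=> r _; rewrite (bigD1 (Ordinal (HB r))) //= eqxx big1 ?mulr1 //.
  move=> v hv; case: ifP => // /eqP E; move: hv; rewrite -(inj_eq val_inj) /= E eqxx.
  by [].
by rewrite exchange_big /=; apply: eq_bigr => v _; rewrite prod_ifpow.
Qed.

Lemma mset (R : comPzSemiRingType) n (F : nat -> R) (g h : 'I_n -> nat) B :
  (forall r, (g r < B)%N) -> (forall r, (h r < B)%N) ->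
  (forall v, (\sum_(r < n) ((g r <= v)%N : nat) = \sum_(r < n) ((h r <= v)%N : nat))%N) ->
  \prod_(r < n) F (g r) = \prod_(r < n) F (h r).
Proof.
move=> Hg Hh Hc; rewrite (prod_count F Hg) (prod_count F Hh).
apply: eq_bigr => v _; congr (_ ^+ _).
move: (nat_of_ord v) => x.
have Hlt : forall f : 'I_n -> nat, (\sum_(r < n) ((f r < x)%N : nat) =
   if x is w.+1 then \sum_(r < n) ((f r <= w)%N : nat) else 0)%N.
  move=> f; case: x => [|w]; last by [].
  by rewrite big1 // => r _; rewrite ltn0.
have := cnt_split g x; have := cnt_split h x; rewrite !Hlt Hc.
clear Hlt; case: x => [|w]; rewrite ?Hc; lia.
Qed.

Section RleS.
Variable R : comPzSemiRingType.
Hypothesis Hidem : forall x : R, x + x = x.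
Local Notation le := (@le R).
Variables (m n : nat) (alpha : 'I_m -> R) (beta : 'I_n -> R).
Local Notation a := (elem_sym alpha).
Local Notation b := (elem_sym beta).
Local Notation N := (m + n)%N.
Local Notation RR := (\prod_(i < m) \prod_(j < n) (alpha i + beta j)).
Variable kap : {ffun 'I_n -> 'I_m.+1}.

Definition l0 (i : nat) := (\sum_(j < n) ((kap j <= i)%N : nat))%N.
Definition k0 (r : nat) := (\sum_(i < m) ((l0 i <= r)%N : nat))%N.

Lemma sum_bool_le k (P : pred 'I_k) : (\sum_(i < k) (P i : nat) <= k)%N.
Proof.
apply: (@leq_trans (\sum_(i < k) 1)%N); first by apply: leq_sum => i _; case: (P i).
by rewrite sum_nat_const card_ord muln1.
Qed.

Lemma l0_le i : (l0 i <= n)%N. Proof. exact: sum_bool_le. Qed.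
Lemma k0_le r : (k0 r <= m)%N. Proof. exact: sum_bool_le. Qed.
Lemma l0_mono i i' : (i <= i')%N -> (l0 i <= l0 i')%N.
Proof.
move=> h; apply: leq_sum => j _; case h1: (kap j <= i)%N => //=.
by rewrite (leq_trans h1 h).
Qed.
Lemma k0_mono r r' : (r <= r')%N -> (k0 r <= k0 r')%N.
Proof.
move=> h; apply: leq_sum => j _; case h1: (l0 j <= r)%N => //=.
by rewrite (leq_trans h1 h).
Qed.
Lemma l0_big i : (m <= i)%N -> l0 i = n.
Proof.
move=> h; rewrite /l0 (eq_bigr (fun _ => 1%N)) ?sum_nat_const ?card_ord ?muln1 //.
move=> j _; have := ltn_ord (kap j); rewrite ltnS => hj.
by rewrite (leq_trans hj h).
Qed.

Lemma k0_char v r : (v < m)%N -> (k0 r <= v)%N = (r < l0 v)%N.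
Proof.
move=> hv; apply/idP/idP => H.
  rewrite ltnNge; apply/negP => H2; move: H; apply/negP; rewrite -ltnNge.
  apply: (@leq_trans (\sum_(i < m) ((i < v.+1)%N : nat))%N).
    by rewrite sum_lt; rewrite (minn_idPr _).
  apply: leq_sum => i _; case h: (i < v.+1)%N => //=.
  by rewrite ltnS in h; rewrite (leq_trans (l0_mono h) H2).
apply: (@leq_trans (\sum_(i < m) ((i < v)%N : nat))%N); last first.
  by rewrite sum_lt geq_minr.
apply: leq_sum => i _; case h: (l0 i <= r)%N => //=.
case h2: (i < v)%N => //; move/negbT: h2; rewrite -leqNgt => h2.
by move: (leq_trans (l0_mono h2) h); rewrite leqNgt H.
Qed.

Lemma no_cross r i : (r < n)%N -> (i < m)%N -> (r + k0 r)%N != (i + l0 i)%N.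
Proof.
move=> hr hi; case: (leqP (l0 i) r) => h.
  have : (i.+1 <= k0 r)%N.
    apply: (@leq_trans (\sum_(i' < m) ((i' < i.+1)%N : nat))%N).
      by rewrite sum_lt; rewrite (minn_idPr _).
    apply: leq_sum => i' _; case h': (i' < i.+1)%N => //=.
    by rewrite ltnS in h'; rewrite (leq_trans (l0_mono h') h).
  move=> h2; apply/eqP; lia.
have := k0_char r hi; rewrite h => h2; apply/eqP; lia.
Qed.

Definition sk (t : 'I_N) : nat := if (t < n)%N then (t + k0 t)%N else (t - n + l0 (t - n))%N.

Lemma sk_lt t : (sk t < N)%N.
Proof.
rewrite /sk; case: ifP => h.
  have := k0_le t; lia.
have := l0_le (t - n); have := ltn_ord t; move/negbT: h; rewrite -leqNgt; lia.
Qed.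

Definition skf (t : 'I_N) : 'I_N := Ordinal (sk_lt t).

Lemma skf_inj : injective skf.
Proof.
move=> t1 t2 /(congr1 val); rewrite /= /sk => E; apply: val_inj => /=.
case: ifP E => h1; case: ifP => h2 E.
- case: (ltngtP t1 t2) => // h.
    by have := k0_mono (ltnW h); lia.
  by have := k0_mono (ltnW h); lia.
- have := @no_cross t1 (t2 - n) h1; move/negbT: h2; rewrite -leqNgt => h2.
  have := ltn_ord t2; move=> ht2 H; have : (t2 - n < m)%N by lia.
  by move/H; rewrite E eqxx.
- have := @no_cross t2 (t1 - n) h2; move/negbT: h1; rewrite -leqNgt => h1.
  have := ltn_ord t1; move=> ht1 H; have : (t1 - n < m)%N by lia.
  by move/H; rewrite E eqxx.
- move/negbT: h1; move/negbT: h2; rewrite -!leqNgt => h2 h1.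
  case: (ltngtP (t1 - n) (t2 - n)) => h.
  + by have := l0_mono (ltnW h); lia.
  + by have := l0_mono (ltnW h); lia.
  + lia.
Qed.

Definition sig : 'S_N := perm skf_inj.

Lemma term_sig : term alpha beta sig = \prod_(r < n) a (k0 r) * \prod_(i < m) b (l0 i).
Proof.
rewrite /term big_split_fg /=; congr (_ * _); apply: eq_bigr => t _.
  by rewrite permE /= /sk /E /G /= (ltn_ord t) leq_addr addKn.
rewrite permE /= /sk /E /G /= ltnNge leq_addr /= addKn leq_addr.
by rewrite addKn.
Qed.
End RleS.
Section Final.
Variable R : comPzSemiRingType.
Hypothesis Hidem : forall x : R, x + x = x.
Local Notation le := (@le R).
Variables (m n : nat) (alpha : 'I_m -> R) (beta : 'I_n -> R).
Local Notation a := (elem_sym alpha).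
Local Notation b := (elem_sym beta).
Local Notation N := (m + n)%N.
Local Notation RR := (\prod_(i < m) \prod_(j < n) (alpha i + beta j)).

Lemma kappa_le (kap : {ffun 'I_n -> 'I_m.+1}) :
  le (\prod_(j < n) (a (kap j) * beta j ^+ (m - kap j))) (term alpha beta (sig kap)).
Proof.
rewrite term_sig big_split /=.
have -> : \prod_(j < n) a (kap j) = \prod_(r < n) a (k0 kap r).
  symmetry; apply: (@mset _ _ _ _ _ m.+1).
  - by move=> r; rewrite ltnS k0_le.
  - by move=> j; apply: ltn_ord.
  move=> v; case: (ltnP v m) => hv.
    rewrite (eq_bigr (fun r : 'I_n => ((r < l0 kap v)%N : nat))); last first.
      by move=> r _; rewrite k0_char.
    by rewrite sum_lt (minn_idPr (l0_le _ _)).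
  have := l0_big kap hv; rewrite /l0 => ->.
  rewrite (eq_bigr (fun _ => 1%N)) ?sum_nat_const ?card_ord ?muln1 //.
  by move=> r _; rewrite (leq_trans (k0_le _ _) hv).
have -> : \prod_(j < n) beta j ^+ (m - kap j) =
    \prod_(i < m) \prod_(j in [set j : 'I_n | (kap j <= i)%N]) beta j.
  rewrite betaF; apply: eq_bigr => j _; congr (_ ^+ _).
  rewrite -sum_ge; last by rewrite -ltnS.
  by apply: eq_bigr => i _; rewrite inE.
apply: le_mul; first exact: le_refl.
apply: (le_prod Hidem) => i _.
apply: (le_summand Hidem (fun S : {set 'I_n} => \prod_(j in S) beta j)).
by rewrite card_sum.
Qed.

Lemma per_term : permanent (sylvester m n a b) = \sum_(s : 'S_N) term alpha beta s.
Proof.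
by apply: eq_bigr => s _; apply: eq_bigr => t _; rewrite ME.
Qed.

Lemma main_eq : RR = permanent (sylvester m n a b).
Proof.
rewrite per_term; apply: le_antisym.
  rewrite exchange_big /=.
  apply: le_trans (le_prod Hidem (fun j _ => prod_le_es Hidem alpha (beta j))) _.
  rewrite bigA_distr_bigA /=.
  apply: (big_ind (fun x => le x _)); [exact: le0| |move=> kap _].
    by move=> x y Hx Hy; rewrite /le -addrA Hy Hx.
  apply: le_trans (kappa_le kap) _.
  exact: (le_summand Hidem (fun s : 'S_N => term alpha beta s)).
apply: (big_ind (fun x => le x _)); [exact: le0| |move=> s _].
  by move=> x y Hx Hy; rewrite /le -addrA Hy Hx.
exact: term_le_R.
Qed.
End Final.

Theorem mainTheorem1 (R : comPzSemiRingType)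
  (Hidem : forall x : R, x + x = x)
  (m n : nat) (Hm : (1 <= m)%N) (Hn : (1 <= n)%N)
  (alpha : 'I_m -> R) (beta : 'I_n -> R) :
  \prod_(i < m) \prod_(j < n) (alpha i + beta j)
  = permanent (sylvester m n (elem_sym alpha) (elem_sym beta)).
Proof. exact: (main_eq Hidem alpha beta). Qed.
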